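(* Let $(\mathcal{P},\cdot)$ be an admissible Poisson algebra and let $\varphi:\mathcal{P}\times\mathcal{P}\to\mathcal{P}$ be a skew-symmetric bilinear map which is a derivation of $\bullet$ in each argument, i.e. $\varphi(X\bullet Y,Z)=X\bullet\varphi(Y,Z)+\varphi(X,Z)\bullet Y$ for all $X,Y,Z$ (a Lichnerowicz-Poisson $2$-cochain). Then $\delta_{LP}\varphi=0$ if and only if $\delta^2_{\mathcal{P}}\varphi=0$.
   Context: $\mathbb{K}$ is a field of characteristic different from $2$ and $3$. Associator: $A(X,Y,Z)=(X\cdot Y)\cdot Z-X\cdot(Y\cdot Z)$. An admissible Poisson algebra is a $\mathbb{K}$-vector space $\mathcal{P}$ with a bilinear product $\cdot$ satisfying $3A(X,Y,Z)=(X\cdot Z)\cdot Y+(Y\cdot Z)\cdot X-(Y\cdot X)\cdot Z-(Z\cdot X)\cdot Y$; $\{X,Y\}=\frac12(X\cdot Y-Y\cdot X)$, $X\bullet Y=\frac12(X\cdot Y+Y\cdot X)$. Lichnerowicz-Poisson differential on a skew-symmetric bilinear $\varphi$: $\delta_{LP}\varphi(X_0,X_1,X_2)=\sum_{i=0}^2(-1)^i\{X_i,\varphi(X_0,\dots,\widehat{X_i},\dots,X_2)\}+\sum_{0\le i<j\le2}(-1)^{i+j}\varphi(\{X_i,X_j\},X_k)$ where $k$ is the remaining index. Poisson differential: $\delta^2_{\mathcal{P}}\varphi(X,Y,Z)=3\varphi(X\cdot Y,Z)-3\varphi(X,Y\cdot Z)-\varphi(X\cdot Z,Y)-\varphi(Y\cdot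 Z,X)+\varphi(Y\cdot X,Z)+\varphi(Z\cdot X,Y)+3\varphi(X,Y)\cdot Z-3X\cdot\varphi(Y,Z)-\varphi(X,Z)\cdot Y-\varphi(Y,Z)\cdot X+\varphi(Y,X)\cdot Z+\varphi(Z,X)\cdot Y$. *)

(* Defs.v *)
From HB Require Import structures.
From mathcomp Require Import all_boot all_order all_algebra.
Set Implicit Arguments. Unset Strict Implicit. Unset Printing Implicit Defensive.
Import Order.TTheory GRing.Theory Num.Theory.
Local Open Scope ring_scope.

Section AdmPoisson.
Variables (K : fieldType) (P : lmodType K) (mul : P -> P -> P).

Definition bilinear_map (f : P -> P -> P) : Prop :=
  (forall (a : K) (x y z : P), f (a *: x + y) z = a *: f x z + f y z) /\
  (forall (a : K) (x y z : P), f x (a *: y + z) = a *: f x y + f x z).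

Definition assoc (X Y Z : P) : P := mul (mul X Y) Z - mul X (mul Y Z).

Definition admissible_poisson : Prop :=
  forall X Y Z : P,
    3%:R *: assoc X Y Z =
      mul (mul X Z) Y + mul (mul Y Z) X - mul (mul Y X) Z - mul (mul Z X) Y.

Definition pbr (X Y : P) : P := (2%:R)^-1 *: (mul X Y - mul Y X).
Definition jprod (X Y : P) : P := (2%:R)^-1 *: (mul X Y + mul Y X).

Definition skew_sym (phi : P -> P -> P) : Prop := forall X Y, phi X Y = - phi Y X.

Definition jderivation2 (phi : P -> P -> P) : Prop :=
  (forall X Y Z, phi (jprod X Y) Z = jprod X (phi Y Z) + jprod (phi X Z) Y) /\
  (forall X Y Z, phi Z (jprod X Y) = jprod X (phi Z Y) + jprod (phi Z X) Y).

Definition deltaLP (phi : P -> P -> P) (X0 X1 X2 : P) : P :=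
  pbr X0 (phi X1 X2) - pbr X1 (phi X0 X2) + pbr X2 (phi X0 X1)
  - phi (pbr X0 X1) X2 + phi (pbr X0 X2) X1 - phi (pbr X1 X2) X0.

Definition deltaP2 (phi : P -> P -> P) (X Y Z : P) : P :=
  3%:R *: phi (mul X Y) Z - 3%:R *: phi X (mul Y Z)
  - phi (mul X Z) Y - phi (mul Y Z) X + phi (mul Y X) Z + phi (mul Z X) Y
  + 3%:R *: mul (phi X Y) Z - 3%:R *: mul X (phi Y Z)
  - mul (phi X Z) Y - mul (phi Y Z) X + mul (phi Y X) Z + mul (phi Z X) Y.

End AdmPoisson.

(* Main.v *)
Require Import Defs.
From HB Require Import structures.
From mathcomp Require Import all_boot all_order all_algebra.
From mathcomp Require Import ring.
Import GRing.Theory.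
Local Open Scope ring_scope.
Set Implicit Arguments. Unset Strict Implicit.

Section Helpers.
Variables (K : fieldType) (V : lmodType K).

Section LC.
Variable s : seq V.
Definition lc (c : nat -> K) : V := \sum_(i < size s) c i *: nth 0 s i.
Lemma lcD c1 c2 : lc c1 + lc c2 = lc (fun i => c1 i + c2 i).
Proof. by rewrite /lc -big_split /=; apply: eq_bigr => i _; rewrite scalerDl. Qed.
Lemma lcN c : - lc c = lc (fun i => - c i).
Proof. by rewrite /lc -sumrN; apply: eq_bigr => i _; rewrite scaleNr. Qed.
Lemma lcZ k c : k *: lc c = lc (fun i => k * c i).
Proof. by rewrite /lc scaler_sumr; apply: eq_bigr => i _; rewrite scalerA. Qed.
Lemma lcE j : (j < size s)%N -> nth 0 s j = lc (fun i => ((i == j) : nat)%:R).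
Proof.
move=> hj; rewrite /lc (bigD1 (Ordinal hj)) //= eqxx scale1r big1 ?addr0 //.
move=> i /eqP hi; case: eqP => [e|_]; last by rewrite scale0r.
by exfalso; apply: hi; apply: val_inj.
Qed.
Lemma lc_eq c1 c2 : (forall i, (i < size s)%N -> c1 i = c2 i) -> lc c1 = lc c2.
Proof. by move=> h; apply: eq_bigr => i _; rewrite h. Qed.
End LC.

Variable f : V -> V -> V.
Hypothesis hf : bilinear_map f.
Lemma blDl x y z : f (x + y) z = f x z + f y z.
Proof. by case: hf => h _; have := h 1 x y z; rewrite !scale1r. Qed.
Lemma bl0l z : f 0 z = 0.
Proof. by have := blDl 0 0 z; rewrite addr0 => /eqP; rewrite -subr_eq subrr eq_sym => /eqP. Qed.
Lemma blZl a x z : f (a *: x) z = a *: f x z.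
Proof. by case: hf => h _; have := h a x 0 z; rewrite addr0 bl0l addr0. Qed.
Lemma blNl x z : f (- x) z = - f x z.
Proof. by rewrite -scaleN1r blZl scaleN1r. Qed.
Lemma blDr x y z : f x (y + z) = f x y + f x z.
Proof. by case: hf => _ h; have := h 1 x y z; rewrite !scale1r. Qed.
Lemma bl0r z : f z 0 = 0.
Proof. by have := blDr z 0 0; rewrite addr0 => /eqP; rewrite -subr_eq subrr eq_sym => /eqP. Qed.
Lemma blZr a x z : f z (a *: x) = a *: f z x.
Proof. by case: hf => _ h; have := h a z x 0; rewrite addr0 bl0r addr0. Qed.
Lemma blNr x z : f z (- x) = - f z x.
Proof. by rewrite -scaleN1r blZr scaleN1r. Qed.
End Helpers.

Lemma key (K : fieldType) (P : lmodType K) (mul : P -> P -> P)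
    (phi : P -> P -> P) (h2 : (2%:R : K) != 0)
    (hmul : bilinear_map mul) (hphi : bilinear_map phi) (hskew : skew_sym phi)
    X Y Z :
  deltaP2 mul phi X Y Z + 2%:R *: deltaLP mul phi X Y Z =
  4%:R *: (phi (jprod mul X Y) Z - (jprod mul X (phi Y Z) + jprod mul (phi X Z) Y))
  + 2%:R *: (phi (jprod mul Y Z) X - (jprod mul Y (phi Z X) + jprod mul (phi Y X) Z)).
Proof.
rewrite /deltaP2 /deltaLP /pbr /jprod (hskew X (mul Y Z)) (hskew Y X) (hskew Z X).
rewrite !(blDl hmul, blNl hmul, blZl hmul, blDr hmul, blNr hmul, blZr hmul,
          blDl hphi, blNl hphi, blZl hphi).
pose s := [:: phi (mul X Y) Z; phi (mul Y X) Z; phi (mul X Z) Y; phi (mul Z X) Y;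
  phi (mul Y Z) X; phi (mul Z Y) X; mul (phi X Y) Z; mul Z (phi X Y);
  mul (phi X Z) Y; mul Y (phi X Z); mul (phi Y Z) X; mul X (phi Y Z)].
have e0 : phi (mul X Y) Z = lc s _ := lcE (s:=s) (j:=0) isT.
have e1 : phi (mul Y X) Z = lc s _ := lcE (s:=s) (j:=1) isT.
have e2 : phi (mul X Z) Y = lc s _ := lcE (s:=s) (j:=2) isT.
have e3 : phi (mul Z X) Y = lc s _ := lcE (s:=s) (j:=3) isT.
have e4 : phi (mul Y Z) X = lc s _ := lcE (s:=s) (j:=4) isT.
have e5 : phi (mul Z Y) X = lc s _ := lcE (s:=s) (j:=5) isT.
have e6 : mul (phi X Y) Z = lc s _ := lcE (s:=s) (j:=6) isT.
have e7 : mul Z (phi X Y) = lc s _ := lcE (s:=s) (j:=7) isT.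
have e8 : mul (phi X Z) Y = lc s _ := lcE (s:=s) (j:=8) isT.
have e9 : mul Y (phi X Z) = lc s _ := lcE (s:=s) (j:=9) isT.
have e10 : mul (phi Y Z) X = lc s _ := lcE (s:=s) (j:=10) isT.
have e11 : mul X (phi Y Z) = lc s _ := lcE (s:=s) (j:=11) isT.
rewrite e0 e1 e2 e3 e4 e5 e6 e7 e8 e9 e10 e11.
rewrite ?(lcZ, lcN, lcD).
apply: lc_eq => i hi; have {hi} : (i < 12)%N by [].
by do 12! (case: i => [|i] /=; first by move=> _; field; exact: h2).
Qed.

Unset Implicit Arguments.

Theorem mainTheorem18 (K : fieldType) (P : lmodType K) (mul : P -> P -> P)
    (phi : P -> P -> P)
    (hK2 : (2 \notin [pchar K])%N) (hK3 : (3 \notin [pchar K])%N)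
    (hmul : bilinear_map mul) (hadm : admissible_poisson mul)
    (hphi : bilinear_map phi) (hskew : skew_sym phi)
    (hder : jderivation2 mul phi) :
  (forall X Y Z : P, deltaLP mul phi X Y Z = 0) <->
  (forall X Y Z : P, deltaP2 mul phi X Y Z = 0).
Proof.
have h2 : (2%:R : K) != 0.
  by apply/negP => h; apply: (negP hK2); rewrite inE /= h.
have E : forall X Y Z, deltaP2 mul phi X Y Z + 2%:R *: deltaLP mul phi X Y Z = 0.
  move=> X Y Z; rewrite (key h2 hmul hphi hskew).
  by rewrite (hder.1 X Y Z) (hder.1 Y Z X) !subrr !scaler0 addr0.
split => H X Y Z.
  by have := E X Y Z; rewrite H scaler0 addr0.
have := E X Y Z; rewrite H add0r => /eqP; rewrite scaler_eq0 (negbTE h2) /=.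
by move/eqP.
Qed.
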